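(* Let $\rho>0$ and for an indexed family $\xi=(\xi_{l,m,n})_{(l,m,n)\in\mathbb{Z}_+^3\setminus\{\mathbf 0\}}$ define $\mathcal T\xi_{l,m,n}=\frac{n\rho}{2}\xi_{l+1,m+1,n-1}+\frac{l(l-1+2n)}{2}\xi_{l-1,m,n}+\frac{m(m-1+2n)}{2}\xi_{l,m-1,n}+\frac{n(n-1)}{2}\xi_{l,m,n-1}+lm\,\xi_{l-1,m-1,n+1}$, where terms with a negative index are zero. For any $R,K\in\mathbb{Z}_+$ and any $(l,m,n)$ of rank at most $R$ and class at most $K$, $\mathcal T\xi_{l,m,n}$ is a linear combination of entries $\xi_{l',m',n'}$ whose rank is at most $R$ and class at most $K$ (i.e. the span of moments of rank $\le R$ and class $\le K$ is closed under $\mathcal T$). Moreover the indices $(l+1,m+1,n-1)$ (recombination term) and $(l-1,m-1,n+1)$ (null coalescence term) have the same rank and class as $(l,m,n)$.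
   Context: The rank of $(l,m,n)\in\mathbb{Z}_+^3$ (equivalently of the moment $\mathbb{E}[x^l y^m x_1^n]$) is $l+m+2n$ and its class is $n+\min\{l,m\}$. *)

(* Defs.v *)
From mathcomp Require Import all_boot all_order all_algebra.
Set Implicit Arguments. Unset Strict Implicit. Unset Printing Implicit Defensive.
Import Order.TTheory GRing.Theory Num.Theory.

Definition idx := (nat * nat * nat)%type.

Definition rank (i : idx) : nat := let: (l, m, n) := i in (l + m + 2 * n)%N.
Definition cls (i : idx) : nat := let: (l, m, n) := i in (n + minn l m)%N.

Local Open Scope ring_scope.

(* A family xi indexed by Z_+^3 \ {0} is given as a function on idx whose
   value at (0,0,0) is ignored.  [xiget xi l m n] reads the entry at an
   integer index, returning 0 when some index is negative (convention of the
   paper) or the index is 0 (not part of the family). *)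
Definition xiget (R : ringType) (xi : idx -> R) (l m n : int) : R :=
  if [&& (0 <= l), (0 <= m), (0 <= n) & ~~ [&& l == 0, m == 0 & n == 0]]
  then xi (absz l, absz m, absz n) else 0.

Definition Top (R : fieldType) (rho : R) (xi : idx -> R) (i : idx) : R :=
  let: (l, m, n) := i in
  let lz := (l : int) in let mz := (m : int) in let nz := (n : int) in
    n%:R * rho / 2%:R * xiget xi (lz + 1) (mz + 1) (nz - 1)
  + l%:R * (l%:R - 1 + 2%:R * n%:R) / 2%:R * xiget xi (lz - 1) mz nz
  + m%:R * (m%:R - 1 + 2%:R * n%:R) / 2%:R * xiget xi lz (mz - 1) nz
  + n%:R * (n%:R - 1) / 2%:R * xiget xi lz mz (nz - 1)
  + l%:R * m%:R * xiget xi (lz - 1) (mz - 1) (nz + 1).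

(* Main.v *)
Require Import Defs.
From mathcomp Require Import all_boot all_order all_algebra.
From mathcomp Require Import zify.
Import Order.TTheory GRing.Theory Num.Theory.
Local Open Scope ring_scope.

Definition ent (R : realFieldType) (c : R) (a b d : int) : seq (idx * R) :=
  if [&& (0 <= a), (0 <= b), (0 <= d) & ~~ [&& a == 0, b == 0 & d == 0]]
  then [:: ((absz a, absz b, absz d), c)] else [::].

Lemma entE (R : realFieldType) (xi : idx -> R) c a b d :
  c * xiget xi a b d = \sum_(p <- @ent R c a b d) p.2 * xi p.1.
Proof.
rewrite /xiget /ent; case: ifP => _.
  by rewrite big_cons big_nil addr0.
by rewrite big_nil mulr0.
Qed.

Lemma entP (R : realFieldType) (c : R) (a b d : int) (P : idx -> bool) :
  (forall x y z : nat, a = x%:Z -> b = y%:Z -> d = z%:Z -> ~~ [&& x == 0%N, y == 0%N & z == 0%N] -> P (x, y, z)) ->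
  all (fun p => [&& p.1 != (0, 0, 0)%N & P p.1]) (@ent R c a b d).
Proof.
move=> H; rewrite /ent; case: ifP => // H4; case/and4P: H4 => ha hb hd hnz /=.
have ea : a = absz a by rewrite abszE ger0_norm.
have eb : b = absz b by rewrite abszE ger0_norm.
have ed : d = absz d by rewrite abszE ger0_norm.
have hnz' : ~~ [&& absz a == 0%N, absz b == 0%N & absz d == 0%N].
  by rewrite !absz_eq0.
rewrite H // !andbT; apply/eqP => -[h1 h2 h3].
by move: hnz'; rewrite h1 h2 h3.
Qed.

Theorem mainTheorem2 (R : realFieldType) (rho : R) (hrho : 0 < rho)
    (Rk K : nat) :
  (forall i : idx, i != (0, 0, 0)%N -> (rank i <= Rk)%N -> (cls i <= K)%N ->
     exists s : seq (idx * R),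
       all (fun p => [&& p.1 != (0, 0, 0)%N, (rank p.1 <= Rk)%N
                       & (cls p.1 <= K)%N]) s /\
       forall xi : idx -> R, Top rho xi i = \sum_(p <- s) p.2 * xi p.1)
  /\ (forall l m n : nat, (0 < n)%N ->
        rank (l.+1, m.+1, n.-1) = rank (l, m, n) /\
        cls (l.+1, m.+1, n.-1) = cls (l, m, n))
  /\ (forall l m n : nat, (0 < l)%N -> (0 < m)%N ->
        rank (l.-1, m.-1, n.+1) = rank (l, m, n) /\
        cls (l.-1, m.-1, n.+1) = cls (l, m, n)).
Proof.
split; last first.
  split=> l m n /=; [move=> h | move=> h1 h2]; split; lia.
case=> [[l m] n] _ /= hr hc.
pose P := fun p : idx => ((rank p <= Rk)%N && (cls p <= K)%N).
exists (@ent R (n%:R * rho / 2%:R) (l%:Z + 1) (m%:Z + 1) (n%:Z - 1)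
     ++ @ent R (l%:R * (l%:R - 1 + 2%:R * n%:R) / 2%:R) (l%:Z - 1) m n
     ++ @ent R (m%:R * (m%:R - 1 + 2%:R * n%:R) / 2%:R) l (m%:Z - 1) n
     ++ @ent R (n%:R * (n%:R - 1) / 2%:R) l m (n%:Z - 1)
     ++ @ent R (l%:R * m%:R) (l%:Z - 1) (m%:Z - 1) (n%:Z + 1)).
split.
  rewrite !all_cat; apply/and5P; split; apply: (@entP _ _ _ _ _ P);
    move=> x y z ex ey ez _; rewrite /P /=; apply/andP; split; lia.
move=> xi; rewrite /Top !big_cat /= -!entE.
by rewrite !addrA.
Qed.
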